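(* Let $\sigma>0$, $\alpha>0$, and set $\eta=\sqrt{\alpha+1}$. Define $p(t)=(\alpha+1)\log(\sigma\eta+t)$ for $t\ge0$, and for $\hat\beta\in\mathbb{R}$ let $$\tilde\beta(\hat\beta)=\arg\min_{\beta\in\mathbb{R}}\left\{\tfrac12(\hat\beta-\beta)^2+\sigma^{2}p(|\beta|)\right\}.$$ Then for every $\hat\beta\in\mathbb{R}$ this minimizer is unique, and the estimator $\hat\beta\mapsto\tilde\beta(\hat\beta)$ is a continuous function of $\hat\beta$ on $\mathbb{R}$.
   Context: This penalty is the part of $-\log\pi(\beta\mid\sigma)$ depending on $\beta$ under the generalized double Pareto prior $\mathrm{GDP}(\xi=\sigma\eta/\alpha,\alpha)$ with density $\frac{1}{2\xi}(1+|\beta|/(\alpha\xi))^{-(\alpha+1)}$; the problem corresponds to one coordinate of penalized least squares with orthonormal design, $\hat\beta=\mathbf{x}_j'\mathbf{y}$. *)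

(* Defs.v *)
From Stdlib Require Import Reals.
Open Scope R_scope.

Definition gdp_eta (alpha : R) : R := sqrt (alpha + 1).

Definition gdp_pen (sigma alpha t : R) : R :=
  (alpha + 1) * ln (sigma * gdp_eta alpha + t).

Definition gdp_obj (sigma alpha bhat b : R) : R :=
  / 2 * (bhat - b) ^ 2 + sigma ^ 2 * gdp_pen sigma alpha (Rabs b).

Definition is_argmin (f : R -> R) (b : R) : Prop := forall y : R, f b <= f y.

(* Main.v *)
Require Import Defs.
From Stdlib Require Import Reals Lra Psatz.
From Coquelicot Require Import Coquelicot.
Open Scope R_scope.

Lemma phi_pos (c u v : R) : 0 < c -> c <= u -> c <= v -> u <> v ->
  0 < c^2 * (ln u - ln v) + c^2 * (v - u) / v + (u - v)^2 / 2.
Proof.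
  intros hc hu hv huv.
  set (psi := fun t => c^2 * ln t - c^2 * t / v + (t - v)^2 / 2).
  set (dpsi := fun t => c^2 / t - c^2 / v + (t - v)).
  assert (hd : forall t, c <= t -> derivable_pt_lim psi t (dpsi t)).
  { intros t ht. apply is_derive_Reals. unfold psi, dpsi.
    auto_derive. lra. field. split; lra. }
  assert (E : c^2 * (ln u - ln v) + c^2 * (v - u) / v + (u - v)^2 / 2 = psi u - psi v).
  { unfold psi. field. lra. }
  rewrite E.
  destruct (Rlt_or_le u v) as [h|h].
  - destruct (MVT_cor2 psi dpsi u v h) as [xi [Hxi Hr]].
    { intros t ht. apply hd. lra. }
    assert (dpsi xi < 0).
    { unfold dpsi.
      replace (c ^ 2 / xi - c ^ 2 / v + (xi - v)) with ((xi - v) * (xi * v - c^2) / (xi * v)) by (field; lra).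
      apply Rdiv_neg_pos; [|nra]. apply Rmult_neg_pos; nra. }
    nra.
  - assert (h' : v < u) by lra.
    destruct (MVT_cor2 psi dpsi v u h') as [xi [Hxi Hr]].
    { intros t ht. apply hd. lra. }
    assert (0 < dpsi xi).
    { unfold dpsi.
      replace (c ^ 2 / xi - c ^ 2 / v + (xi - v)) with ((xi - v) * (xi * v - c^2) / (xi * v)) by (field; lra).
      apply Rdiv_lt_0_compat; [apply Rmult_lt_0_compat|]; nra. }
    nra.
Qed.

Definition F (c x b : R) := / 2 * (x - b) ^ 2 + c ^ 2 * ln (c + Rabs b).

Lemma core (c x B y : R) : 0 < c -> 0 <= B -> 0 <= x - B ->
  (0 < B -> x - B = c^2 / (c + B)) -> (B = 0 -> x <= c) -> y <> B ->
  F c x B < F c x y.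
Proof.
  intros hc hB hw h1 h2 hy. unfold F.
  rewrite (Rabs_pos_eq B hB).
  set (v := c + B). set (u := c + Rabs y).
  assert (hu : c <= u) by (unfold u; pose proof (Rabs_pos y); lra).
  assert (hv : c <= v) by (unfold v; lra).
  assert (hK : (x - B - c^2 / v) * (v - u) >= 0).
  { destruct (Rle_lt_or_eq_dec 0 B hB) as [hp|he].
    - rewrite (h1 hp). unfold v. lra.
    - assert (x <= c) by auto. subst B. unfold v.
      replace (c^2 / (c + 0)) with c by (field; lra). nra. }
  set (K := c^2 / v) in *.
  assert (hKv : K * v = c^2) by (unfold K; field; lra).
  assert (Hphi : u <> v -> 0 < c^2 * (ln u - ln v) + c^2 * (v - u) / v + (u - v)^2 / 2) by (intro; apply phi_pos; auto).
  replace (c^2 * (v - u) / v) with (K * (v - u)) in Hphi by (unfold K; field; lra).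
  destruct (Rle_or_lt 0 y) as [hy0|hy0].
  - assert (u = c + y) by (unfold u; rewrite Rabs_pos_eq; lra).
    assert (u <> v) by (unfold v; lra).
    specialize (Hphi H0). unfold v in *. nra.
  - assert (u = c - y) by (unfold u; rewrite Rabs_left; lra).
    destruct (Req_dec u v) as [e|ne].
    + assert (B > 0) by (unfold v in *; lra). unfold v in *. rewrite e. nra.
    + specialize (Hphi ne). unfold v in *. nra.
Qed.

Definition G (c z : R) :=
  let m := (z - c + Rabs (z - c)) / 2 in (m + sqrt (m * (m + 4 * c))) / 2.
Definition Bt (c x : R) := G c x - G c (- x).

Lemma G_zero c z : z <= c -> G c z = 0.
Proof.
  intro h. unfold G. rewrite Rabs_left1 by lra.
  replace ((z - c + - (z - c)) / 2) with 0 by field.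
  rewrite Rmult_0_l, sqrt_0. field.
Qed.

Lemma Bt_props c x : 0 < c -> 0 <= x ->
  0 <= Bt c x /\ 0 <= x - Bt c x /\
  (0 < Bt c x -> x - Bt c x = c^2 / (c + Bt c x)) /\ (Bt c x = 0 -> x <= c).
Proof.
  intros hc hx. unfold Bt. rewrite (G_zero c (-x)) by lra. rewrite Rminus_0_r.
  destruct (Rle_or_lt x c) as [h|h].
  - rewrite G_zero by lra. repeat split; intros; lra.
  - unfold G. rewrite Rabs_pos_eq by lra.
    replace ((x - c + (x - c)) / 2) with (x - c) by field.
    set (m := x - c).
    assert (hm : 0 < m) by (unfold m; lra).
    assert (hs2 : sqrt (m * (m + 4 * c)) * sqrt (m * (m + 4 * c)) = m * (m + 4 * c))
      by (apply sqrt_sqrt; nra).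
    pose proof (sqrt_pos (m * (m + 4 * c))).
    set (s := sqrt (m * (m + 4 * c))) in *.
    assert (he : x - (m + s) / 2 = c^2 / (c + (m + s) / 2)).
    { field_simplify_eq; [|lra]. unfold m in *. nra. }
    assert (0 < c^2 / (c + (m + s) / 2)) by (apply Rdiv_lt_0_compat; nra).
    repeat split; intros; lra.
Qed.

Lemma Bt_odd c x : Bt c (- x) = - Bt c x.
Proof. unfold Bt. rewrite Ropp_involutive. ring. Qed.

Lemma F_sym c x b : F c (- x) (- b) = F c x b.
Proof. unfold F. rewrite Rabs_Ropp. f_equal. f_equal. ring. Qed.

Lemma Bt_strict c x y : 0 < c -> y <> Bt c x -> F c x (Bt c x) < F c x y.
Proof.
  intros hc hy. destruct (Rle_or_lt 0 x) as [hx|hx].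
  - destruct (Bt_props c x hc hx) as [a [b [d e]]]. apply core; auto.
  - assert (hx' : 0 <= - x) by lra.
    destruct (Bt_props c (-x) hc hx') as [a [b [d e]]].
    rewrite <- (F_sym c x (Bt c x)), <- (F_sym c x y), <- Bt_odd.
    apply core; auto. rewrite Bt_odd. intro h. apply hy. lra.
Qed.

Lemma G_cont c : 0 < c -> continuity (G c).
Proof.
  intros hc z.
  set (m := fun z => (z - c + Rabs (z - c)) / 2).
  assert (hm : continuity m).
  { intro t. unfold m. apply continuity_pt_div; [| apply continuity_pt_const; intros ?? ; reflexivity | lra].
    apply continuity_pt_plus.
    - apply continuity_pt_minus; [apply continuity_pt_id | apply continuity_pt_const; intros ??; reflexivity].
    - apply (continuity_pt_comp (fun t => t - c) Rabs).
      + apply continuity_pt_minus; [apply continuity_pt_id | apply continuity_pt_const; intros ??; reflexivity].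
      + apply Rcontinuity_abs. }
  assert (hm0 : forall t, 0 <= m t) by (intro t; unfold m; destruct (Rcase_abs (t - c)); [rewrite Rabs_left | rewrite Rabs_right]; lra).
  change (continuity_pt (fun z => (m z + sqrt (m z * (m z + 4 * c))) / 2) z).
  apply continuity_pt_div; [| apply continuity_pt_const; intros ?? ; reflexivity | lra].
  apply continuity_pt_plus; [apply hm|].
  apply (continuity_pt_comp (fun z => m z * (m z + 4 * c)) sqrt).
  - apply continuity_pt_mult; [apply hm|]. apply continuity_pt_plus; [apply hm|].
    apply continuity_pt_const; intros ??; reflexivity.
  - apply continuity_pt_sqrt. specialize (hm0 z). cbv beta. apply Rmult_le_pos; lra.
Qed.

Lemma Bt_cont c : 0 < c -> continuity (Bt c).
Proof.
  intros hc. unfold Bt. intro z.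
  apply continuity_pt_minus; [apply G_cont; auto|].
  apply (continuity_pt_comp Ropp (G c)); [apply continuity_pt_opp, continuity_pt_id | apply G_cont; auto].
Qed.

Lemma obj_F sigma alpha x b : 0 < alpha ->
  gdp_obj sigma alpha x b = F (sigma * gdp_eta alpha) x b.
Proof.
  intro ha. unfold gdp_obj, gdp_pen, F.
  replace ((sigma * gdp_eta alpha) ^ 2) with (sigma ^ 2 * (alpha + 1)).
  - ring.
  - unfold gdp_eta. rewrite Rpow_mult_distr, pow2_sqrt by lra. ring.
Qed.

Theorem proposition4 (sigma alpha : R) (hsigma : 0 < sigma) (halpha : 0 < alpha) :
  (forall bhat : R, exists! b : R, is_argmin (gdp_obj sigma alpha bhat) b) /\
  (exists betatilde : R -> R,
      (forall bhat : R, is_argmin (gdp_obj sigma alpha bhat) (betatilde bhat)) /\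
      continuity betatilde).
Proof.
  set (c := sigma * gdp_eta alpha).
  assert (hc : 0 < c).
  { unfold c, gdp_eta. apply Rmult_lt_0_compat; auto. apply sqrt_lt_R0; lra. }
  assert (harg : forall x, is_argmin (gdp_obj sigma alpha x) (Bt c x)).
  { intros x y. rewrite !obj_F by lra. fold c.
    destruct (Req_dec y (Bt c x)) as [e|ne]; [rewrite e; lra|].
    left. apply Bt_strict; auto. }
  split.
  - intro x. exists (Bt c x). split; [apply harg|].
    intros b hb. specialize (hb (Bt c x)). rewrite !obj_F in hb by lra. fold c in hb.
    destruct (Req_dec b (Bt c x)) as [e|ne]; auto.
    pose proof (Bt_strict c x b hc ne). lra.
  - exists (Bt c). split; [apply harg| apply Bt_cont; auto].
Qed.
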